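(* Let $2\le s\le r$ be integers with $r>2$. For every graph $\Gamma$, we have $$\mathrm{ex}(\Gamma,\mathcal{P}_{K_{s,r}})\ \ge\ \frac{1}{2}\,e(\Gamma)\,\mathrm{ex}(\chi(\overline{\Gamma}),K_{s,r})\Big/\binom{\chi(\overline{\Gamma})}{2}.$$
   Context: For a graph $H$, $\mathcal{P}_H$ is the hereditary property of not containing $H$ as an induced subgraph. For a property $\mathcal{P}$ and a graph $\Gamma$, $\mathrm{ex}(\Gamma,\mathcal{P})$ is the maximum number of edges of a subgraph $G\subseteq\Gamma$ that belongs to $\mathcal{P}$. $\mathrm{ex}(k,K_{s,r})$ is the maximum number of edges of a $k$-vertex graph not containing $K_{s,r}$ as a (not necessarily induced) subgraph. $\overline{\Gamma}$ is the complement of $\Gamma$ and $\chi$ denotes chromatic number. *)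

(* Defs.v *)
From mathcomp Require Import all_boot all_order all_algebra.
Set Implicit Arguments. Unset Strict Implicit. Unset Printing Implicit Defensive.

Definition simple_graph (T : finType) (e : rel T) : Prop :=
  symmetric e /\ irreflexive e.

Definition simple_graphb (T : finType) (e : rel T) : bool :=
  [forall x, forall y, e x y == e y x] && [forall x, ~~ e x x].

Definition nedges (T : finType) (e : rel T) : nat :=
  #|[set A : {set T} | [exists x, exists y, (A == [set x; y]) && e x y]]|.

Definition compl_graph (T : finType) (e : rel T) : rel T :=
  fun x y => (x != y) && ~~ e x y.

Definition colorable (T : finType) (e : rel T) (k : nat) : bool :=
  [exists c : {ffun T -> 'I_k}, [forall x, forall y, e x y ==> (c x != c y)]].

(* least k <= #|T| admitting a proper k-colouring (always exists for loopless e) *)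
Definition chromatic (T : finType) (e : rel T) : nat :=
  \big[minn/#|T|]_(k < #|T|.+1 | colorable e k) k.

Definition Kbip (s r : nat) : rel ('I_s + 'I_r)%type :=
  fun x y => match x, y with
             | inl _, inr _ | inr _, inl _ => true
             | _, _ => false
             end.
Arguments Kbip : clear implicits.

Definition contains_sub (V T : finType) (h : rel V) (g : rel T) : bool :=
  [exists f : {ffun V -> T}, injectiveb f &&
     [forall u, forall v, h u v ==> g (f u) (f v)]].

Definition contains_induced (V T : finType) (h : rel V) (g : rel T) : bool :=
  [exists f : {ffun V -> T}, injectiveb f &&
     [forall u, forall v, g (f u) (f v) == h u v]].

Definition frel (T : finType) (g : {ffun T * T -> bool}) : rel T :=
  fun x y => g (x, y).

(* ex(Gamma, P_H): max number of edges of a subgraph G of Gamma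
   (same vertex set) with no induced copy of H. *)
Definition ex_ind (V T : finType) (h : rel V) (e : rel T) : nat :=
  \max_(g : {ffun T * T -> bool} |
          [&& simple_graphb (frel g), [forall x, forall y, frel g x y ==> e x y]
              & ~~ contains_induced h (frel g)]) nedges (frel g).

Definition ex_num (V : finType) (k : nat) (h : rel V) : nat :=
  \max_(g : {ffun 'I_k * 'I_k -> bool} |
          simple_graphb (frel g) && ~~ contains_sub h (frel g))
     nedges (frel g).

(* Main.v *)
Require Import Defs.
From mathcomp Require Import all_boot all_order all_algebra all_fingroup.
From mathcomp Require Import zify.
From mathcomp.algebra_tactics Require Import ring.

Module Helpers.
Set Implicit Arguments. Unset Strict Implicit. Unset Printing Implicit Defensive.

Definition Dn (T : finType) (g : rel T) : nat := \sum_(x : T) \sum_(y : T) (g x y : nat).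

Lemma DnE (T : finType) (g : rel T) : symmetric g -> irreflexive g ->
  Dn g = (nedges g).*2.
Proof.
move=> gs gi; rewrite /Dn pair_big /=.
rewrite -big_mkcondr /= sum1dep_card.
set P := [set p : T * T | g p.1 p.2].
rewrite -sum1_card (partition_big_imset (fun p : T * T => [set p.1; p.2])) /=.
have -> : [set [set p.1; p.2] | p in P] =
   [set A : {set T} | [exists x, exists y, (A == [set x; y]) && g x y]].
  apply/setP => A; rewrite inE; apply/imsetP/existsP.
    by case=> [[x y]]; rewrite inE /= => gxy ->; exists x; apply/existsP; exists y; rewrite eqxx.
  case=> x /existsP [y /andP [/eqP -> gxy]]; exists (x, y) => //; by rewrite inE.
rewrite /nedges -mul2n mulnC -sum_nat_const; apply: eq_bigr => A.
rewrite inE => /existsP [x /existsP [y /andP [/eqP -> gxy]]].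
rewrite sum1dep_card.
have xy : x != y by apply: contraTneq gxy => ->; rewrite gi.
have -> : [set p | (p \in P) && ([set p.1; p.2] == [set x; y])] = [set (x, y); (y, x)].
  apply/setP => [[a b]]; rewrite !inE /=.
  apply/idP/idP.
    case/andP=> gab /eqP E.
    have ha : a \in [set x; y] by rewrite -E set21.
    have hb : b \in [set x; y] by rewrite -E set22.
    move: ha hb gab; rewrite !inE => /orP [/eqP -> | /eqP ->] /orP [/eqP -> | /eqP ->];
      by rewrite ?gi ?eqxx ?orbT.
  case/orP => /eqP [-> ->]; rewrite ?gxy ?eqxx //= gs gxy /=.
  by rewrite setUC.
rewrite cards2; case: eqP => // [[]] E; by rewrite E eqxx in xy.
Qed.


Lemma two_trans k (i j i' j' : 'I_k) : i != j -> i' != j' ->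
  exists t : {perm 'I_k}, t i' = i /\ t j' = j.
Proof.
move=> ij ij'.
set z := tperm i' i j'.
have zi : z != i by rewrite /z -{2}(tpermL i' i) (inj_eq perm_inj) eq_sym.
exists (tperm i' i * tperm z j)%g; rewrite !permM; split.
  by rewrite tpermL tpermD // eq_sym.
by rewrite tpermL.
Qed.

Lemma avg k (f : 'I_k -> 'I_k -> nat) (f0 : forall u, f u u = 0) (i j : 'I_k) :
  i != j ->
  (\sum_(i' : 'I_k) \sum_(j' : 'I_k) (i' != j' : nat)) *
     \sum_(p : {perm 'I_k}) f (p i) (p j)
  = #|{perm 'I_k}| * \sum_u \sum_v f u v.
Proof.
move=> ij.
have S : forall i' j', i' != j' ->
    \sum_(p : {perm 'I_k}) f (p i') (p j') = \sum_(p : {perm 'I_k}) f (p i) (p j).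
  move=> i' j' ij'; have [t [ti tj]] := two_trans ij ij'.
  rewrite (reindex_inj (mulgI t)) /=; apply: eq_bigr => p _.
  by rewrite !permM ti tj.
rewrite big_distrl /=.
rewrite (eq_bigr (fun i' => \sum_(j' : 'I_k) \sum_(p : {perm 'I_k}) f (p i') (p j'))); last first.
  move=> i' _; rewrite big_distrl /=; apply: eq_bigr => j' _.
  case: eqP => [-> | /eqP ne]; first by rewrite mul0n big1 // => p _; rewrite f0.
  simpl. rewrite mul1n. by rewrite (S _ _ ne).
rewrite pair_big /= exchange_big /= -sum_nat_const; apply: eq_bigr => p _.
rewrite -(pair_big predT predT (fun a b => f (p a) (p b))) /=.
symmetry; rewrite (reindex_inj (@perm_inj _ p)) /=; apply: eq_bigr => u _.
by rewrite (reindex_inj (@perm_inj _ p)).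
Qed.

Lemma exists_avg (I : finType) (i0 : I) (F : I -> nat) :
  exists i, \sum_j F j <= #|I| * F i.
Proof.
have h : 0 < #|I| by apply/card_gt0P; exists i0.
have [i Hi] := eq_bigmax F h; exists i.
rewrite -Hi -sum_nat_const; apply: leq_sum => j _; exact: leq_bigmax.
Qed.



Lemma other1 n (i : 'I_n) : 1 < n -> exists i', i' != i.
Proof.
move=> hn; have : 0 < #|predC1 i| by rewrite cardC1 card_ord; lia.
by case/card_gt0P => x; rewrite inE => ?; exists x.
Qed.

Lemma other2 n (i : 'I_n) : 2 < n -> exists j1 j2, [/\ j1 != i, j2 != i & j1 != j2].
Proof.
move=> hn; have [j1 h1] := other1 i (ltnW hn).
have : 0 < #|~: [set i; j1]|.
  by have := cardsC [set i; j1]; rewrite cards2 eq_sym h1 card_ord; lia.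
case/card_gt0P => x; rewrite !inE negb_or => /andP [a b]; exists j1, x.
by split => //; rewrite eq_sym.
Qed.

Lemma stepC (s r : nat) (hs : 1 < s) (hr : 2 < r) (T : finType) (e : rel T) k
  (X0 : {set 'I_k}) (HH : rel 'I_k) (sigma : T -> 'I_k)
  (HHs : symmetric HH) (HHcut : forall u v, HH u v -> (u \in X0) != (v \in X0))
  (HHfree : forall F : 'I_s + 'I_r -> 'I_k, injective F ->
      ~ (forall u v, Kbip s r u v -> HH (F u) (F v)))
  (sig : forall x y, sigma x = sigma y -> x = y \/ e x y)
  (f : 'I_s + 'I_r -> T) :
  injective f ->
  ~ (forall u v, e (f u) (f v) && ((sigma (f u) == sigma (f v)) || HH (sigma (f u)) (sigma (f v)))
        = Kbip s r u v).
Proof.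
move=> finj Hf.
pose G x y := e x y && ((sigma x == sigma y) || HH (sigma x) (sigma y)).
have Gne : forall x y, G x y -> sigma x != sigma y -> HH (sigma x) (sigma y).
  by move=> x y /andP [_ /orP [/eqP -> | //]]; rewrite eqxx.
have hAB : forall i j, G (f (inl i)) (f (inr j)) by move=> i j; rewrite /G Hf.
have hAA : forall i i', ~~ G (f (inl i)) (f (inl i')) by move=> i i'; rewrite /G Hf.
have hBB : forall j j', ~~ G (f (inr j)) (f (inr j')) by move=> j j'; rewrite /G Hf.
have injgen : forall u v, ~~ G (f u) (f v) -> sigma (f u) = sigma (f v) -> u = v.
  move=> u v nG eq; case: (sig _ _ eq) => [/finj // | euv].
  by move: nG; rewrite /G euv eq eqxx.
have injA : forall i i', sigma (f (inl i)) = sigma (f (inl i')) -> i = i'.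
  by move=> i i' E; have [] := injgen _ _ (hAA i i') E.
have injB : forall j j', sigma (f (inr j)) = sigma (f (inr j')) -> j = j'.
  by move=> j j' E; have [] := injgen _ _ (hBB j j') E.
have cutT : forall p w q : 'I_k, (p \in X0) != (w \in X0) -> (w \in X0) != (q \in X0) ->
    (p \in X0) != (q \in X0) -> False.
  by move=> p w q; case: (p \in X0); case: (w \in X0); case: (q \in X0).
have key : forall i j, sigma (f (inl i)) != sigma (f (inr j)).
  move=> i j; apply/eqP => E.
  have [i' hi'] := other1 i hs.
  have [j1 [j2 [h1 h2 h12]]] := other2 j hr.
  have nA : sigma (f (inl i')) != sigma (f (inr j)).
    by rewrite -E; apply/eqP => /injA /eqP; rewrite (negbTE hi').
  have nB : forall j0, j0 != j -> sigma (f (inl i)) != sigma (f (inr j0)).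
    by move=> j0 hj0; rewrite E; apply/eqP => /injB /eqP; rewrite eq_sym (negbTE hj0).
  have c1 := HHcut _ _ (Gne _ _ (hAB i' j) nA).
  have eqj : forall j0, j0 != j -> sigma (f (inl i')) = sigma (f (inr j0)).
    move=> j0 hj0; have c2 := HHcut _ _ (Gne _ _ (hAB i j0) (nB _ hj0)).
    apply/eqP; apply/negP => /negP ne.
    have c3 := HHcut _ _ (Gne _ _ (hAB i' j0) ne).
    by rewrite -E in c1; apply: (cutT _ _ _ c1 c2 c3).
  by move/eqP: h12; apply; apply: injB; rewrite -!eqj.
apply: (HHfree (fun u => sigma (f u))).
  move=> [i|j] [i'|j'] /= E.
  - by rewrite (injA _ _ E).
  - by move: (key i j'); rewrite E eqxx.
  - by move: (key i' j); rewrite E eqxx.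
  - by rewrite (injB _ _ E).
move=> [i|j] [i'|j'] //= _.
- exact: Gne (hAB i j') (key i j').
- by rewrite HHs; apply: Gne (hAB i' j) (key i' j).
Qed.


Lemma sum_bool (T : finType) (P : pred T) :
  \sum_(x : T) (P x : nat) = #|[set x | P x]|.
Proof.
rewrite -sum1dep_card [RHS]big_mkcond /=; apply: eq_bigr => x _; by case: (P x).
Qed.

Lemma P2E k : \sum_(i : 'I_k) \sum_(j : 'I_k) (i != j : nat) = k * k.-1.
Proof.
rewrite (eq_bigr (fun _ => k.-1)) ?sum_nat_const ?card_ord //.
move=> i _; rewrite sum_bool.
have -> : [set j | i != j] = [set~ i] by apply/setP => j; rewrite !inE eq_sym.
by rewrite cardsC1 card_ord.
Qed.

Lemma cardX0 n m : m <= n -> #|[set u : 'I_n | u < m]| = m.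
Proof.
move=> mn; rewrite -sum1dep_card -(big_ord_widen _ (fun _ => 1)) //.
by rewrite sum1_card card_ord.
Qed.

Lemma ncutE k (X0 : {set 'I_k}) :
  \sum_u \sum_v ((u \in X0) != (v \in X0) : nat) = 2 * #|X0| * (k - #|X0|).
Proof.
have cC := cardsC X0; rewrite card_ord in cC.
have inner : forall b, \sum_v (b != (v \in X0) : nat) = if b then k - #|X0| else #|X0|.
  case=> /=; rewrite sum_bool.
    have -> : [set x | ~~ (x \in X0)] = ~: X0 by apply/setP => x; rewrite !inE.
    move: cC; set a := #|X0|; set b := #|~: X0|; lia.
  have -> : [set x | false != (x \in X0)] = X0 by apply/setP => x; rewrite !inE; case: (x \in X0).
  done.
rewrite (eq_bigr (fun u => if u \in X0 then k - #|X0| else #|X0|)); last by move=> u _; rewrite inner.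
rewrite (bigID (fun u => u \in X0)) /=.
rewrite (eq_bigr (fun _ => k - #|X0|)); last by move=> u ->.
rewrite [X in _ + X](eq_bigr (fun _ => #|X0|)); last by move=> u /negbTE ->.
rewrite !sum_nat_cond_const.
have -> : [set x | x \in X0] = X0 by apply/setP => x; rewrite !inE.
have -> : [set x | x \notin X0] = ~: X0 by apply/setP => x; rewrite !inE.
move: cC; set a := #|X0|; set b := #|~: X0|. move=> <-; rewrite addKn; nia.
Qed.

Lemma sum3 (A B C : finType) (F : A -> B -> C -> nat) :
  \sum_a \sum_b \sum_c F a b c = \sum_c \sum_a \sum_b F a b c.
Proof.
rewrite pair_big /= exchange_big /=; apply: eq_bigr => c _.
by rewrite -(pair_big predT predT (fun a b => F a b c)).
Qed.

Lemma cut_big k : k * k.-1 <= 2 * (2 * k./2 * (k - k./2)).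
Proof. have := odd_double_half k; case: (odd k) => /= h; nia. Qed.
Lemma binP2 n : n * n.-1 = 2 * 'C(n, 2).
Proof. elim: n => // n IH; rewrite binS bin1; case: n IH => //= n IH; nia. Qed.


Lemma main_nat (s r : nat) (hs : 2 <= s) (hr : 2 < r)
  (T : finType) (e : rel T) (He : simple_graph e) :
  let k := chromatic (compl_graph e) in
  1 < k -> nedges e * ex_num k (Kbip s r) <= ex_ind (Kbip s r) e * (2 * 'C(k, 2)).
Proof.
move=> k hk; case: He => es ei.
have col : colorable (compl_graph e) k.
  rewrite /k /chromatic; apply: (big_ind (fun m => colorable (compl_graph e) m)).
  - apply/existsP; exists [ffun x => enum_rank x]; apply/forallP => x; apply/forallP => y.
    apply/implyP => /andP [xy _]; by rewrite !ffunE (inj_eq enum_rank_inj).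
  - by move=> a b ha hb; rewrite /minn; case: ifP.
  - by move=> i.
case/existsP: col => c /forallP cP.
have csig : forall x y, c x = c y -> x = y \/ e x y.
  move=> x y cxy; case: (eqVneq x y) => [-> | xy]; first by left.
  case exy: (e x y); first by right.
  by move: (cP x) => /forallP /(_ y); rewrite /compl_graph xy exy cxy eqxx.
set X := ex_num k (Kbip s r).
pose PH := fun g : {ffun 'I_k * 'I_k -> bool} =>
   simple_graphb (Defs.frel g) && ~~ contains_sub (Kbip s r) (Defs.frel g).
case: (pickP PH) => [H0 PH0 | none]; last first.
  have -> : X = 0 by rewrite /X /ex_num big_pred0.
  by rewrite muln0.
have hcard : 0 < #|PH| by apply/card_gt0P; exists H0.
have [H PHH HX] := eq_bigmax_cond (fun g => nedges (Defs.frel g)) hcard.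
have XE : X = nedges (Defs.frel H) by rewrite /X /ex_num; exact HX.
set Hr := Defs.frel H.
case/andP: PHH => sgH freeH.
case/andP: sgH => /forallP hs1 /forallP hi1.
have Hs : symmetric Hr by move=> x y; exact/eqP/(forallP (hs1 x) y).
have Hi : irreflexive Hr by move=> x; apply/negbTE/hi1.
have Hfree : forall F : 'I_s + 'I_r -> 'I_k, injective F ->
    ~ (forall u v, Kbip s r u v -> Hr (F u) (F v)).
  move=> F Finj HF; move/negP: freeH; apply; apply/existsP; exists [ffun u => F u].
  apply/andP; split.
    by apply/injectiveP => u v; rewrite !ffunE; exact: Finj.
  apply/forallP => u; apply/forallP => v; apply/implyP => kb; rewrite !ffunE; exact: HF.
have DHr : Dn Hr = X.*2 by rewrite XE DnE.
pose X0 := [set u : 'I_k | u < k./2].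
pose cut := fun u v : 'I_k => (u \in X0) != (v \in X0).
pose N := #|{perm 'I_k}|.
pose P2 := \sum_(i : 'I_k) \sum_(j : 'I_k) (i != j : nat).
have Npos : 0 < N by apply/card_gt0P; exists 1%g.
have P2E' : P2 = 2 * 'C(k, 2) by rewrite /P2 P2E binP2.
have P2pos : 0 < P2 by rewrite P2E' muln_gt0 bin_gt0.
pose C := fun rho : {perm 'I_k} => \sum_u \sum_v (cut u v && Hr (rho u) (rho v) : nat).
have sumC : P2 * \sum_rho C rho = N * Dn Hr * (\sum_u \sum_v (cut u v : nat)).
  rewrite /C -(sum3 (fun u v (rho : {perm 'I_k}) => (cut u v && Hr (rho u) (rho v) : nat))).
  rewrite big_distrr [RHS]big_distrr /=; apply: eq_bigr => u _.
  rewrite big_distrr [RHS]big_distrr /=; apply: eq_bigr => v _.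
  case cu: (cut u v) => /=; last by rewrite sum_nat_const !muln0.
  have uv : u != v by apply: contraTneq cu => ->; rewrite /cut eqxx.
  have f0 : forall w, (Hr w w : nat) = 0 by move=> w; rewrite Hi.
  by rewrite muln1; exact: (avg f0 uv).
have [rho hrho] := exists_avg 1%g C.
have ncutE' := ncutE X0.
have cX0 : #|X0| = k./2 by rewrite cardX0 // -{2}(odd_double_half k) -addnn; lia.
have XC : X <= C rho.
  have h1 : P2 * \sum_rho C rho <= P2 * (N * C rho) by rewrite leq_mul2l hrho orbT.
  rewrite sumC ncutE' cX0 DHr in h1.
  have cb := cut_big k.
  rewrite /P2 P2E in h1 P2pos.
  move: h1 cb P2pos Npos; set a := k * k.-1; set b := 2 * k./2 * (k - k./2); set cc := C rho.
  move=> h1 cb P2pos Npos.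
  have h2 : X.*2 * b <= a * cc.
    by rewrite -(leq_pmul2l Npos) mulnA mulnCA.
  have h3 : X.*2 * a <= X.*2 * (2 * b) by rewrite leq_mul2l cb orbT.
  have h4 : X.*2 * a <= 2 * (a * cc) by apply: leq_trans h3 _; rewrite mulnCA leq_mul2l h2 orbT.
  by rewrite -(leq_pmul2r P2pos) -(leq_pmul2l (isT : 0 < 2)) mulnA mul2n [cc * a]mulnC.
pose HH := fun u v : 'I_k => Hr (rho u) (rho v) && cut u v.
have DHH : Dn HH = C rho.
  by apply: eq_bigr => u _; apply: eq_bigr => v _; rewrite /HH andbC.
have HHs : symmetric HH by move=> u v; rewrite /HH Hs /cut eq_sym.
have HHi : irreflexive HH by move=> u; rewrite /HH /cut eqxx andbF.
have HHcut : forall u v, HH u v -> (u \in X0) != (v \in X0) by move=> u v /andP [].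
have HHfree : forall F : 'I_s + 'I_r -> 'I_k, injective F ->
    ~ (forall u v, Kbip s r u v -> HH (F u) (F v)).
  move=> F Finj HF; apply: (Hfree (fun u => rho (F u))).
    by move=> u v /perm_inj /Finj.
  by move=> u v /HF /andP [].
have DHHle : Dn HH <= P2.
  apply: leq_sum => u _; apply: leq_sum => v _.
  by case: (eqVneq u v) => [->|]; rewrite ?HHi //; case: (HH u v).
pose val := fun pi : {perm 'I_k} =>
  \sum_x \sum_y (e x y * ((c x == c y) + HH (pi (c x)) (pi (c y)))).
have f0 : forall w, (HH w w : nat) = 0 by move=> w; rewrite HHi.
have sumval : N * Dn HH * Dn e <= P2 * \sum_pi val pi.
  rewrite /val -(sum3 (fun x y (pi : {perm 'I_k}) =>
     (e x y * ((c x == c y) + HH (pi (c x)) (pi (c y)))))).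
  rewrite [N * _ * _]mulnC; set K := N * Dn HH.
  have De : Dn e = \sum_(x : T) \sum_(y : T) (e x y : nat) by [].
  rewrite De big_distrl [X in _ <= X]big_distrr /=.
  apply: leq_sum => x _.
  rewrite big_distrl [X in _ <= X]big_distrr /=; apply: leq_sum => y _.
  case: (e x y) => /=; last by rewrite mul0n.
  rewrite mul1n (eq_bigr (fun pi : {perm 'I_k} => (c x == c y) + HH (pi (c x)) (pi (c y))));
    last by move=> pi _; rewrite mul1n.
  case: (eqVneq (c x) (c y)) => [-> | ne].
    rewrite (eq_bigr (fun _ => 1)); last by move=> pi _; rewrite HHi.
    rewrite sum_nat_const muln1 /K mulnC; apply: leq_mul => //.

  rewrite (eq_bigr (fun pi : {perm 'I_k} => (HH (pi (c x)) (pi (c y)) : nat)));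
    last by [].
  rewrite /K -(avg f0 ne); exact: leqnn.
have [pi hpi] := exists_avg 1%g val.
have valB : Dn HH * Dn e <= P2 * val pi.
  rewrite -(leq_pmul2l Npos) mulnA; apply: leq_trans sumval _.
  by rewrite mulnCA leq_mul2l hpi orbT.
pose sigma := fun x => pi (c x).
pose G := fun x y => e x y && ((sigma x == sigma y) || HH (sigma x) (sigma y)).
have valG : val pi = Dn G.
  apply: eq_bigr => x _; apply: eq_bigr => y _.
  rewrite /G /sigma (inj_eq perm_inj); case: (e x y) => //=.
  by rewrite mul1n; case: eqP => [-> | _]; rewrite ?HHi.
pose g := [ffun p : T * T => G p.1 p.2].
have frelg : forall x y, Defs.frel g x y = G x y by move=> x y; rewrite /Defs.frel ffunE.
have Gs : symmetric G by move=> x y; rewrite /G es eq_sym HHs.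
have Gi : irreflexive G by move=> x; rewrite /G ei.
have gs : symmetric (Defs.frel g) by move=> x y; rewrite !frelg Gs.
have gi : irreflexive (Defs.frel g) by move=> x; rewrite frelg Gi.
have DG : Dn G = (nedges (Defs.frel g)).*2.
  rewrite -DnE //; apply: eq_bigr => x _; apply: eq_bigr => y _; by rewrite frelg.
have cand : nedges (Defs.frel g) <= ex_ind (Kbip s r) e.
  apply: leq_bigmax_cond; apply/and3P; split.
  - apply/andP; split; [apply/forallP => x; apply/forallP => y; by rewrite gs |
      apply/forallP => x; by rewrite gi].
  - apply/forallP => x; apply/forallP => y; apply/implyP; rewrite frelg; by case/andP.
  - apply/negP => /existsP [f /andP [/injectiveP finj /forallP hf]].
    apply: (stepC (e := e) (sigma := sigma) hs hr HHs HHcut HHfree _ finj).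
      by move=> x y /perm_inj /csig.
    by move=> u v; have := forallP (hf u) v; rewrite frelg => /eqP.
have DeE : Dn e = (nedges e).*2 by rewrite DnE.
rewrite valG DG DeE DHH P2E' in valB.
set nG := nedges (Defs.frel g) in valB cand.
set E := nedges e in valB *.
set Cr := C rho in valB XC.
set Ck := 'C(k, 2) in valB *.
set I := ex_ind (Kbip s r) e in cand *.
have h1 : Cr * E <= 2 * Ck * nG.
  move: valB; rewrite -!muln2; nia.
move: h1 cand XC; nia.
Qed.

End Helpers.

Import GRing.Theory Num.Theory.
Local Open Scope ring_scope.

Theorem lemma1p4 (s r : nat) (hs : (2 <= s)%N) (hsr : (s <= r)%N) (hr : (2 < r)%N)
  (T : finType) (e : rel T) (He : simple_graph e) :
  let k := chromatic (compl_graph e) in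
  (ex_ind (Kbip s r) e)%:R >=
    (1 / 2 : rat) * (nedges e)%:R * (ex_num k (Kbip s r))%:R / ('C(k, 2))%:R.
Proof.
cbv zeta; set k := chromatic (compl_graph e).
case: (ltnP 1 k) => hk.
  have h := Helpers.main_nat hs hr He hk.
  have Cpos : (0 < 'C(k, 2))%N by rewrite bin_gt0.
  have -> : (1 / 2 : rat) * (nedges e)%:R * (ex_num k (Kbip s r))%:R / ('C(k, 2))%:R
      = (nedges e * ex_num k (Kbip s r))%:R / (2 * 'C(k, 2))%:R.
    rewrite !natrM; field.
    by rewrite pnatr_eq0 -lt0n Cpos.
  rewrite ler_pdivrMr ?ltr0n ?muln_gt0 ?Cpos // -natrM ler_nat.
  exact: h.
rewrite bin_small // invr0 mulr0; exact: ler0n.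
Qed.
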